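(* Let $\varepsilon\in(0,\tfrac12)$, $n\ge 0$, and let $W_n$ be the weighted diamond defined below. Then any shortest (weighted) path between two vertices of $W_n$ contains at most one edge of weight $1$, and for each $j\in\{1,\dots,n\}$ at most two edges of weight $(\tfrac12+\varepsilon)^j$.
   Context: Diamonds: $D_0$ is an edge; $D_i$ is obtained from $D_{i-1}$ by replacing each edge $uv$ by a quadrilateral $u,a,v,b$. Weighted diamonds: $W_0=D_0$ with its edge of weight $1$; for $n\ge1$, $W_n$ has vertex set $V(D_n)$ and edge set $E(W_{n-1})\cup E(D_n)$, where edges of $W_{n-1}$ keep their weights and each edge of $D_n$ gets weight $(\tfrac12+\varepsilon)^n$. The length of a path is the sum of the weights of its edges; a shortest path is one of minimal length between its endpoints. *)

(* Defs.v *)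
From HB Require Import structures.
From mathcomp Require Import all_boot all_order all_algebra.
Set Implicit Arguments. Unset Strict Implicit. Unset Printing Implicit Defensive.
Import Order.TTheory GRing.Theory Num.Theory.

(* An edge of D_n is encoded by a word of length n over bool*bool: the k-th *)
(* letter (side, br) says how the edge was obtained at step k: when an edge *)
(* uv of D_(k-1) (encoded by the prefix p) is replaced by the quadrilateral *)
(* u, a, v, b, the new vertex a/b is  Mid p br  (br = false: a, true: b),   *)
(* and side = false selects the edge u--(Mid p br), side = true the edge    *)
(* (Mid p br)--v.                                                           *)
(* Vertices: inl false = bottom endpoint s of D_0, inl true = top endpoint  *)
(* t of D_0, inr (p, br) = Mid p br, created at level (size p).+1.          *)

Definition word := seq (bool * bool).
Definition vertex := (bool + (word * bool))%type.

Definition vS : vertex := inl false.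
Definition vT : vertex := inl true.
Definition vMid (p : word) (br : bool) : vertex := inr (p, br).

(* vertex set of D_n (= vertex set of W_n) *)
Definition in_V (n : nat) (x : vertex) : bool :=
  match x with
  | inl _ => true
  | inr (p, _) => size p < n
  end.

Definition step (st : (vertex * vertex) * word) (c : bool * bool) :=
  let: (uv, p) := st in
  let: (u, v) := uv in
  let m := vMid p c.2 in
  ((if c.1 then (m, v) else (u, m)), rcons p c).

(* the two endpoints of the edge encoded by w (an edge of D_(size w)) *)
Definition ends (w : word) : vertex * vertex :=
  (foldl step ((vS, vT), [::]) w).1.

(* edges of W_n : all edges of D_j for j <= n *)
Definition in_E (n : nat) (e : word) : bool := size e <= n.

Local Open Scope ring_scope.
Definition weight (R : realFieldType) (eps : R) (e : word) : R :=
  (2^-1 + eps) ^+ size e.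

Local Close Scope ring_scope.
Definition incident (e : word) (x : vertex) : bool :=
  ((ends e).1 == x) || ((ends e).2 == x).

Definition other (e : word) (x : vertex) : vertex :=
  if (ends e).1 == x then (ends e).2 else (ends e).1.

Fixpoint is_walk (n : nat) (x : vertex) (es : seq word) (y : vertex) : bool :=
  match es with
  | [::] => x == y
  | e :: es' => [&& in_E n e, incident e x & is_walk n (other e x) es' y]
  end.

Fixpoint walk_verts (x : vertex) (es : seq word) : seq vertex :=
  match es with
  | [::] => [:: x]
  | e :: es' => x :: walk_verts (other e x) es'
  end.

Definition is_path (n : nat) (x : vertex) (es : seq word) (y : vertex) : bool :=
  is_walk n x es y && uniq (walk_verts x es).

Local Open Scope ring_scope.
Definition path_length (R : realFieldType) (eps : R) (es : seq word) : R :=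
  \sum_(e <- es) weight eps e.

Definition shortest_path (R : realFieldType) (eps : R) (n : nat)
    (x : vertex) (es : seq word) (y : vertex) : Prop :=
  is_path n x es y /\
  forall es', is_path n x es' y -> path_length eps es <= path_length eps es'.

(* Main.v *)
Require Import Defs.
From HB Require Import structures.
From mathcomp Require Import all_boot all_order all_algebra.
From mathcomp Require Import ring lra.
Set Implicit Arguments. Unset Strict Implicit.
Import Order.TTheory GRing.Theory Num.Theory.

Lemma fold2 (w : word) uv p : (foldl step (uv, p) w).2 = p ++ w.
Proof.
elim: w uv p => [|c w IH] uv p /=; first by rewrite cats0.
case: uv => u v; rewrite IH /= cat_rcons //.
Qed.

Lemma ends_rcons q c : ends (rcons q c) =
  if c.1 then (vMid q c.2, (ends q).2) else ((ends q).1, vMid q c.2).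
Proof.
rewrite /ends foldl_rcons.
have := fold2 q (vS, vT) [::]; case: (foldl step _ q) => [[u v] p] /= ->.
by case: c => [[] b].
Qed.

Definition lvl (x : vertex) : nat :=
  match x with inl _ => 0 | inr (p, _) => (size p).+1 end.

Definition isend (e : word) (x : vertex) := ((ends e).1 == x) || ((ends e).2 == x).

Lemma E1 w x : isend w x ->
  (lvl x <= size w) /\ (forall r b, x = inr (r, b) -> r = take (size r) w /\ size r < size w).
Proof.
elim/last_ind: w x => [|q c IH] x.
  by rewrite /isend /= => /orP[] /eqP <-.
rewrite /isend ends_rcons size_rcons.
have H1 : forall y, isend q y -> (lvl y <= (size q).+1) /\
   (forall r b, y = inr (r, b) -> r = take (size r) (rcons q c) /\ size r < (size q).+1).
  move=> y /IH [h1 h2]; split; first by apply: leqW.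
  move=> r b /h2 [h4 h3]; split; last by apply: leqW.
  by rewrite -cats1 takel_cat ?(ltnW h3).
have H2 : forall b, (lvl (vMid q b) <= (size q).+1) /\
   (forall r b', vMid q b = inr (r, b') -> r = take (size r) (rcons q c) /\ size r < (size q).+1).
  move=> b; split => // r b' [<- _]; split => //.
  by rewrite -cats1 takel_cat // take_size.
move: H1 H2; case: c => [[] b] /= H1 H2 /orP[] /eqP <- //; apply: H1; rewrite /isend eqxx ?orbT //.
Qed.

Lemma ends_neq w : (ends w).1 != (ends w).2.
Proof.
case/lastP: w => [|q c] //; rewrite ends_rcons.
case: c => [[] b] /=; apply/eqP => E.
  have : incident q (vMid q b) by rewrite /incident E eqxx orbT.
  by case/E1 => _ /(_ q b erefl) [_]; rewrite ltnn.
have : incident q (vMid q b) by rewrite /incident E eqxx.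
by case/E1 => _ /(_ q b erefl) [_]; rewrite ltnn.
Qed.

Lemma E2 k w x : incident w x -> lvl x <= k -> incident (take k w) x.
Proof.
elim/last_ind: w => [|q c IH] //.
case: (leqP (size (rcons q c)) k) => hs; first by rewrite take_oversize.
rewrite size_rcons ltnS in hs.
rewrite -cats1 takel_cat // cats1 => hx hl; apply: IH => //.
move: hx; rewrite /incident ends_rcons.
case: c => [[] b] /= /orP[] /eqP E; rewrite ?E ?eqxx ?orbT //;
  by move: hl; rewrite -E /= ltnNge hs.
Qed.

Lemma other_inc e x : incident e x -> incident e (other e x).
Proof. by rewrite /incident /other; case: ifP => _; rewrite eqxx ?orbT. Qed.

Lemma other_neq e x : incident e x -> other e x != x.
Proof.
rewrite /incident /other; have := ends_neq e.
case: (ends e) => a b /=.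
case: (eqVneq a x) => [-> | ax]; rewrite ?eqxx ?(negbTE ax) /=.
  by rewrite eq_sym.
by [].
Qed.

Lemma other_other e x : incident e x -> other e (other e x) = x.
Proof.
rewrite /incident /other; have := ends_neq e.
case: (ends e) => a b /=.
case: (eqVneq a x) => [-> | ] /=.
  by rewrite eq_sym => /negbTE ->.
by rewrite eqxx => _ _ /eqP.
Qed.

Lemma inc2 e x y : incident e x -> incident e y -> y = x \/ y = other e x.
Proof.
rewrite /incident /other; case: (ends e) => a b /=.
case: (eqVneq a x) => [-> | ax]; rewrite ?eqxx ?(negbTE ax) /=.
  by move=> _ /orP[] /eqP <-; auto.
by move=> /eqP <- /orP[] /eqP <-; auto.
Qed.

Section K.
Variable k : nat.
Definition low (x : vertex) := lvl x <= k.
Definition cell (x : vertex) : word :=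
  match x with inl _ => [::] | inr (r, _) => take k r end.

Lemma high_size e x : incident e x -> ~~ low x -> k < size e.
Proof. by move=> /E1 [h _]; rewrite /low -ltnNge => h'; apply: leq_trans h. Qed.

Lemma cellF e x : incident e x -> ~~ low x -> cell x = take k e.
Proof.
case: x => [b|[r b]] //.
move=> /E1 [_ /(_ r b erefl) [h1 _]]; rewrite /low /= -ltnNge ltnS => hk.
by rewrite h1 take_takel.
Qed.

Lemma lvlj e v : size e = k.+1 -> incident e v -> low v = ~~ low (other e v).
Proof.
move=> hs; have H : low (ends e).1 = ~~ low (ends e).2.
  move: hs; case/lastP: e => [|q c] //; rewrite size_rcons => -[hq].
  rewrite ends_rcons; case: c => [[] b] /=; rewrite /low /= hq ltnn /=.
    have : incident q (ends q).2 by rewrite /incident eqxx orbT.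
    by case/E1; rewrite hq => ->.
  have : incident q (ends q).1 by rewrite /incident eqxx.
  by case/E1; rewrite hq => ->.
rewrite /incident /other; move: H; case: (ends e) => a b /= H.
case: (eqVneq a v) => [<- | av] /=; first by rewrite H.
by move=> /eqP <-; rewrite H negbK.
Qed.
End K.

Fixpoint fin (x : vertex) (es : seq word) : vertex :=
  match es with [::] => x | e :: es' => fin (other e x) es' end.
Fixpoint wv (x : vertex) (es : seq word) : seq vertex :=
  match es with [::] => [::] | e :: es' => x :: wv (other e x) es' end.

Lemma walk_verts_cat x a b : walk_verts x (a ++ b) = wv x a ++ walk_verts (fin x a) b.
Proof. by elim: a x => [|e a IH] x //=; rewrite IH. Qed.

Lemma fin_cat x a b : fin x (a ++ b) = fin (fin x a) b.
Proof. by elim: a x => [|e a IH] x //=. Qed.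

Lemma is_walk_cat n x a b y : is_walk n x (a ++ b) y =
  is_walk n x a (fin x a) && is_walk n (fin x a) b y.
Proof.
elim: a x => [|e a IH] x /=; first by rewrite eqxx.
by rewrite IH !andbA.
Qed.

Lemma is_walk_fin n x a y : is_walk n x a y -> y = fin x a.
Proof.
by elim: a x => [|e a IH] x /=; [move/eqP | case/and3P => _ _ /IH].
Qed.

Lemma walk_verts_head x es : exists s, walk_verts x es = x :: s.
Proof. by case: es => [|e es] /=; eexists. Qed.

Section K2.
Variable k n : nat.
Let P := fun e : word => size e == k.+1.
Let hi := fun v => ~~ low k v.

Definition NB z es := forall a e b c, es = a ++ e :: b ++ c ->
  low k (fin z a) -> hi (other e (fin z a)) ->
  all hi (wv (other e (fin z a)) b) -> low k (fin (other e (fin z a)) b) -> False.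

Lemma NB_suf z e es : NB z (e :: es) -> NB (other e z) es.
Proof. by move=> H a e' b c E; apply: (H (e :: a) e' b c); rewrite E. Qed.

Lemma dead es z y : is_walk n z es y -> all hi (walk_verts z es) -> count P es = 0.
Proof.
elim: es z => [|e es IH] z //= /and3P [_ hz hw] /andP [h1 h2].
rewrite (IH _ hw h2) addn0.
case: (walk_verts_head (other e z) es) h2 => s -> /andP [h3 _].
suff -> : P e = false by [].
apply/negbTE/eqP => hs.
by move: (@lvlj k _ _ hs hz) h1 h3; rewrite /hi => ->; case: (low k _).
Qed.

Lemma firstlow es z : hi z -> ~~ all hi (walk_verts z es) ->
  exists b c, es = b ++ c /\ all hi (wv z b) /\ low k (fin z b).
Proof.
elim: es z => [|e es IH] z hz /=; first by rewrite hz.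
rewrite hz /=.
case hl: (low k (other e z)).
  by move=> _; exists [:: e], es; rewrite /= hz hl.
move=> h; have [||b [c [E [H1 H2]]]] := IH (other e z); first by rewrite /hi hl.
  by [].
by exists (e :: b), c; rewrite E /= hz H1 H2.
Qed.

Lemma state1 es u y : low k u -> is_walk n u es y -> NB u es -> count P es <= 1.
Proof.
elim: es u => [|e es IH] u //= hu /and3P [_ hinc hw] hnb.
case hv: (low k (other e u)).
  have -> : P e = false.
    apply/negbTE/eqP => hs; move: (@lvlj k _ _ hs hinc); rewrite hu hv //.
  exact: IH hv hw (NB_suf hnb).
case: (boolP (all hi (walk_verts (other e u) es))) => hall.
  by rewrite (dead hw hall) addn0; case: (P e).
have [b [c [E [H1 H2]]]] := firstlow (negbT hv) hall.
by case: (hnb [::] e b c) => //=; [rewrite E | rewrite /hi hv].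
Qed.

Lemma state0 es x y : is_walk n x es y -> NB x es -> count P es <= 2.
Proof.
elim: es x => [|e es IH] x //= /and3P [hE hinc hw] hnb.
case hx: (low k x).
  apply: (@leq_trans 1) => //.
  by apply: (@state1 (e :: es) x y hx _ hnb); apply/and3P.
case hv: (low k (other e x)).
  have h := state1 hv hw (NB_suf hnb).
  exact: leq_trans (leq_add (leq_b1 _) h) _.
have -> : P e = false.
  apply/negbTE/eqP => hs; move: (@lvlj k _ _ hs hinc); rewrite hx hv //.
exact: IH hw (NB_suf hnb).
Qed.
End K2.

Lemma cellwalk k n b z w : ~~ low k z -> is_walk n z b w ->
  all (fun v => ~~ low k v) (wv z b) -> low k (fin z b) -> incident (cell k z) (fin z b).
Proof.
elim: b z => [|e b IH] z hz /=; first by rewrite (negbTE hz).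
case/and3P => _ hinc hw /andP [_ hb] hl.
rewrite (cellF hinc hz).
case: b IH hw hb hl => [|e2 b] IH hw hb hl.
  by apply: E2 => //; apply: other_inc.
move: (hb) => /= /andP [hz2 _].
by rewrite -(cellF (other_inc hinc) hz2); apply: IH.
Qed.

Lemma hiedges k n b z w : is_walk n z b w -> all (fun v => ~~ low k v) (wv z b) ->
  all (fun e => k < size e) b.
Proof.
elim: b z => [|e b IH] z //= /and3P [_ hinc hw] /andP [hz hb].
by rewrite (high_size hinc hz) (IH _ hw hb).
Qed.

Local Open Scope ring_scope.

Definition posw (R : realFieldType) (w : word) : R * R :=
  foldl (fun pr c => let m := (pr.1 + pr.2) / 2 in
          if c.1 then (m, pr.2) else (pr.1, m)) (0, 1) w.

Definition pos (R : realFieldType) (x : vertex) : R :=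
  match x with inl b => if b then 1 else 0
  | inr (p, _) => ((posw R p).1 + (posw R p).2) / 2 end.

Lemma pos_ends (R : realFieldType) w :
  pos R (ends w).1 = (posw R w).1 /\ pos R (ends w).2 = (posw R w).2.
Proof.
elim/last_ind: w => [|q c [IH1 IH2]] //.
rewrite ends_rcons /posw foldl_rcons -/(posw R q).
by case: c => [[] b] /=; rewrite ?IH1 ?IH2.
Qed.

Lemma posw_diff (R : realFieldType) w : (posw R w).2 - (posw R w).1 = (2^-1) ^+ size w.
Proof.
elim/last_ind: w => [|q c IH] /=; first by rewrite subr0 expr0.
rewrite /posw foldl_rcons -/(posw R q) size_rcons exprSr -IH.
by case: c => [[] b] /=; field.
Qed.

Lemma pos_other (R : realFieldType) e v : incident e v ->
  `|pos R (other e v) - pos R v| = (2^-1) ^+ size e.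
Proof.
have [h1 h2] := pos_ends R e.
have hd := posw_diff R e.
have hp : (0 : R) <= 2^-1 ^+ size e by apply: exprn_ge0; rewrite invr_ge0.
rewrite /incident /other; case: (eqVneq (ends e).1 v) => [<- | ne] /=.
  by rewrite h1 h2 hd ger0_norm.
by move=> /eqP <-; rewrite h1 h2 -opprB hd normrN ger0_norm.
Qed.

Lemma edge_ineq (R : realFieldType) (c : R) k m : 1 < 2 * c -> (k < m)%N ->
  (2^-1) ^+ m * (2 * c) ^+ k.+1 <= c ^+ m.
Proof.
move=> hc hkm.
have -> : c ^+ m = (2^-1) ^+ m * (2 * c) ^+ m.
  by rewrite -exprMn mulrA mulVf ?mul1r // pnatr_eq0.
apply: ler_wpM2l; first by apply: exprn_ge0; rewrite invr_ge0.
by rewrite ler_eXn2l.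
Qed.

Lemma pot (R : realFieldType) (eps : R) n k : 0 < eps -> forall es v w,
  is_walk n v es w -> all (fun e => (k < size e)%N) es ->
  `|pos R w - pos R v| * (2 * (2^-1 + eps)) ^+ k.+1 <= path_length eps es.
Proof.
move=> he; elim => [|e es IH] v w /=.
  by move/eqP => ->; rewrite subrr normr0 mul0r /path_length big_nil.
case/and3P => _ hinc hw /andP [hk hall].
rewrite /path_length big_cons -/(path_length eps es).
have h2 : 1 < 2 * (2^-1 + eps) by rewrite mulrDr mulfV ?pnatr_eq0 //; lra.
have hpos : (0 : R) <= (2 * (2^-1 + eps)) ^+ k.+1 by apply: exprn_ge0; lra.
apply: le_trans (_ : (`|pos R w - pos R (other e v)| + `|pos R (other e v) - pos R v|) * (2 * (2^-1 + eps)) ^+ k.+1 <= _).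
  apply: ler_wpM2r => //.
  by rewrite (le_trans _ (ler_normD _ _)) // addrA subrK.
rewrite mulrDl addrC; apply: lerD; last by apply: IH.
by rewrite pos_other // /weight; apply: edge_ineq.
Qed.

Lemma sp_NB (R : realFieldType) (eps : R) n x es y k : 0 < eps -> (k <= n)%N ->
  shortest_path eps n x es y -> NB k x es.
Proof.
move=> he hkn [/andP [hw hu] hmin] a e b c E hlu hz hb hlw.
set u := fin x a in hlu hz hb hlw; set z := other e u in hz hb hlw.
set w := fin z b in hlw.
move: hw; rewrite E is_walk_cat /= -/u is_walk_cat -/z -/w.
case/andP => hwa /and4P [hE hinc hwb hwc].
move: hu; rewrite E walk_verts_cat -/u /= walk_verts_cat -/z -/w => hu.
have hzi : incident e z by apply: other_inc.
have hke : (k < size e)%N by apply: high_size hzi hz.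
set p := cell k z.
have hp : p = take k e by rewrite /p (cellF hzi hz).
have hpw : incident p w by apply: cellwalk hz hwb hb hlw.
have hpu : incident p u by rewrite hp; apply: E2.
have hsp : size p = k by rewrite hp size_takel // ltnW.
have huw : u != w.
  move: hu; rewrite cat_uniq => /and3P [_ _] /= /andP [hn _].
  apply: contraNneq hn => ->; rewrite mem_cat; case: (walk_verts_head w c) => s ->.
  by rewrite mem_head orbT.
have hop : other p u = w by case: (inc2 hpu hpw) => // /eqP; rewrite eq_sym (negbTE huw).
have hpath : is_path n x (a ++ p :: c) y.
  rewrite /is_path is_walk_cat -/u hwa /= hop hwc hpu /in_E hsp hkn /=.
  rewrite walk_verts_cat -/u /= hop.
  apply: subseq_uniq hu; apply: cat_subseq => //=; rewrite eqxx.
  exact: suffix_subseq.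
have := hmin _ hpath; rewrite E /path_length !big_cat /= !big_cons.
rewrite -!/(path_length eps _) => hle.
have hseg : weight eps p < weight eps e + path_length eps b.
  have hwe : is_walk n u (e :: b) w by rewrite /= hE hinc.
  have hal : all (fun e => (k < size e)%N) (e :: b).
    by rewrite /= hke; apply: hiedges hwb hb.
  have := pot he hwe hal; rewrite /path_length big_cons -/(path_length eps b).
  rewrite -hop (pos_other _ hpu) hsp => H; apply: lt_le_trans H.
  rewrite /weight hsp exprS mulrCA -exprMn mulrA mulVf ?pnatr_eq0 // mul1r.
  rewrite -[X in X < _]mul1r ltr_pM2r; last by apply: exprn_gt0; lra.
  by rewrite mulrDr mulfV ?pnatr_eq0 //; lra.
move: hle; rewrite lerD2l {1}/path_length big_cat -!/(path_length eps _) addrA lerD2r => hle.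
by move: (lt_le_trans hseg hle); rewrite ltxx.
Qed.

Lemma edge_once n e0 : forall es x y, is_walk n x es y -> uniq (walk_verts x es) ->
  (count (fun e => e == e0) es <= 1)%N.
Proof.
elim => [|e es IH] x y //= /and3P [_ hinc hw] /andP [hx hu].
case: (eqVneq e e0) => [<- | _] /=; last by apply: IH hw hu.
rewrite -[X in (_ <= X)%N]/(1 + 0)%N leq_add2l leqn0 eqn0Ngt -has_count.
apply/hasP => -[e1 he1 /eqP E1]; subst e1.
case/splitPr: he1 hw hu hx => a c.
rewrite is_walk_cat /= walk_verts_cat /= => /andP [_ /and3P [_ hv _]].
move=> hu hx.
case: (inc2 hinc hv) => hvx.
  by move: hx; rewrite hvx mem_cat inE eqxx orbT.
move: hx; rewrite mem_cat hvx (other_other hinc).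
by case: c hu => [|? ?] _; rewrite /= !inE eqxx !orbT.
Qed.

Unset Implicit Arguments.
Theorem claimC (R : realFieldType) (eps : R) (n : nat) (x y : vertex)
    (es : seq word) :
  0 < eps -> eps < 2^-1 ->
  in_V n x -> in_V n y ->
  shortest_path eps n x es y ->
  (count (fun e => weight eps e == 1%R) es <= 1)%N /\
  (forall j : nat, (1 <= j <= n)%N ->
     (count (fun e => weight eps e == ((2^-1 + eps) ^+ j)%R) es <= 2)%N).
Proof.
move=> he he2 _ _ hsp.
have hc0 : (0 : R) < 2^-1 + eps by lra.
have hc1 : 2^-1 + eps != 1 :> R by apply/negP => /eqP; lra.
split.
  case: (hsp) => /andP [hw hu] _.
  rewrite (eq_count (a2 := fun e => e == [::])); first by apply: edge_once hw hu.
  move=> e; rewrite /weight ieexprn_weq1 ?(ltW hc0) // (negbTE hc1) orbF.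
  by rewrite size_eq0.
move=> j /andP [hj1 hjn].
case: (hsp) => /andP [hw _] _.
have hk : j = (j.-1).+1 by rewrite prednK.
rewrite (eq_count (a2 := fun e => size e == (j.-1).+1)).
  apply: state0 hw (sp_NB he _ hsp).
  exact: leq_trans (leq_pred j) hjn.
move=> e; rewrite /weight -hk; apply/eqP/eqP => [|-> //].
exact: ieexprIn.
Qed.
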